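(* Let $n \ge 1$ be an integer. Let $\mathcal{A}_3(n)$ be the set of all $3 \times n$ matrices $M=(m_{j,i})$ with entries in $\{0,1,2\}$ such that all three rows of $M$ have the same valuation, i.e. $\sum_{i=1}^{n} m_{1,i}2^{i-1} = \sum_{i=1}^{n} m_{2,i}2^{i-1} = \sum_{i=1}^{n} m_{3,i}2^{i-1}$. Let $\mathcal{S}(n)$ be the set of words $w_1w_2\cdots w_n$ of length $n$ over the alphabet $\{1,2,3,4,5,6,7\}$ whose last letter $w_n$ lies in $\{1,2,3\}$. Then there exists a bijection between $\mathcal{A}_3(n)$ and $\mathcal{S}(n)$.
   Context: For a vector $a=(a_1,\dots,a_n)\in\{0,1,2\}^n$, its valuation is $v(a)=\sum_{i=1}^n a_i 2^{i-1}$. The set $\mathcal{A}_3(n)$ consists of $3\times n$ matrices with entries in $\{0,1,2\}$ whose three rows, viewed as vectors in $\{0,1,2\}^n$, all have equal valuation. Equivalently, $|\mathcal{A}_3(n)|=\sum_k a(n,k)^3$ where $\sum_{k=0}^{2(2^n-1)} a(n,k)x^k=\prod_{i=0}^{n-1}(1+x^{2^i}+x^{2\cdot 2^i})$ (the $n$-th row of Stern's diatomic array). *)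

(* Defs.v *)
From mathcomp Require Import all_boot all_order all_algebra.
Set Implicit Arguments. Unset Strict Implicit. Unset Printing Implicit Defensive.

(* Entries in {0,1,2} are encoded as 'I_3 (value = the entry).
   Column i : 'I_n corresponds to the paper's position i+1, with weight 2^i. *)
Definition valuation (n : nat) (a : 'I_n -> 'I_3) : nat :=
  \sum_(i < n) (a i : nat) * 2 ^ i.

Definition A3 (n : nat) : pred 'M['I_3]_(3, n) :=
  fun M => (valuation (fun i => M (inord 0 : 'I_3) i) == valuation (fun i => M (inord 1 : 'I_3) i))
        && (valuation (fun i => M (inord 1 : 'I_3) i) == valuation (fun i => M (inord 2 : 'I_3) i)).

(* S(n): words of length n over {1,...,7}; letter k+1 is encoded as k : 'I_7.
   Position i : 'I_n is the paper's w_{i+1}; the last letter w_n (i = n-1)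
   must lie in {1,2,3}, i.e. its code is < 3. *)
Definition Swords (n : nat) : pred {ffun 'I_n -> 'I_7} :=
  fun w => [forall i : 'I_n, (val i == n.-1) ==> (w i < 3)].

(* Main.v *)
Require Import Defs.
From mathcomp Require Import all_boot all_order all_algebra zify.
Set Implicit Arguments. Unset Strict Implicit. Unset Printing Implicit Defensive.
Import GRing.Theory.

Section Decomp.
Variable T : finType.

Definition fcons n (x : T) (t : {ffun 'I_n -> T}) : {ffun 'I_n.+1 -> T} :=
  [ffun i => if unlift ord0 i is Some j then t j else x].
Definition ftail n (a : {ffun 'I_n.+1 -> T}) : {ffun 'I_n -> T} :=
  [ffun j => a (lift ord0 j)].

Lemma fconsK n (a : {ffun 'I_n.+1 -> T}) : fcons (a ord0) (ftail a) = a.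
Proof.
apply/ffunP => i; rewrite ffunE; case: unliftP => [j ->|->] //.
by rewrite ffunE.
Qed.

Lemma fcons0 n x (t : {ffun 'I_n -> T}) : fcons x t ord0 = x.
Proof. by rewrite ffunE unlift_none. Qed.

Lemma ftailK n x (t : {ffun 'I_n -> T}) : ftail (fcons x t) = t.
Proof. by apply/ffunP => j; rewrite !ffunE liftK. Qed.

Lemma sum_ffunS n (F : {ffun 'I_n.+1 -> T} -> nat) :
  (\sum_a F a = \sum_x \sum_t F (fcons x t))%N.
Proof.
rewrite pair_big /=.
rewrite (reindex (fun p : T * {ffun 'I_n -> T} => fcons p.1 p.2)) //.
exists (fun a : {ffun 'I_n.+1 -> T} => (a ord0, ftail a)) => [[x t] _|a _] /=.
  by rewrite fcons0 ftailK.
by rewrite fconsK.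
Qed.
End Decomp.

Definition vf n (a : {ffun 'I_n -> 'I_3}) : nat := valuation (fun i => a i).

Lemma vf_cons n (x : 'I_3) (t : {ffun 'I_n -> 'I_3}) : vf (fcons x t) = (x + 2 * vf t)%N.
Proof.
rewrite /vf /valuation big_ord_recl fcons0 expn0 muln1; congr (_ + _)%N.
rewrite big_distrr /=; apply: eq_bigr => i _.
rewrite ffunE liftK /= expnS; lia.
Qed.

Local Open Scope ring_scope.

Definition g n (P : int -> int -> bool) : nat :=
  (\sum_(a : {ffun 'I_n -> 'I_3}) \sum_(b : {ffun 'I_n -> 'I_3}) \sum_(c : {ffun 'I_n -> 'I_3})
     nat_of_bool (P ((vf a)%:Z - (vf b)%:Z)%R ((vf b)%:Z - (vf c)%:Z)%R))%N.

Lemma eq_g n P Q : (forall k l, P k l = Q k l) -> g n P = g n Q.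
Proof.
move=> PQ; apply: eq_bigr => a _; apply: eq_bigr => b _; apply: eq_bigr => c _.
by rewrite PQ.
Qed.

Lemma gS n P : g n.+1 P =
  (\sum_(0 <= x < 3) \sum_(0 <= y < 3) \sum_(0 <= z < 3)
     g n (fun k l => P ((x%:Z - y%:Z) + 2 * k)%R ((y%:Z - z%:Z) + 2 * l)%R))%N.
Proof.
rewrite /g big_mkord sum_ffunS.
under eq_bigr => x _ do under eq_bigr => ta _ do rewrite sum_ffunS.
under eq_bigr => x _ do under eq_bigr => ta _ do under eq_bigr => y _ do
   under eq_bigr => tb _ do rewrite sum_ffunS.
under eq_bigr => x _ do rewrite exchange_big.
under eq_bigr => x _ do under eq_bigr => y _ do under eq_bigr => ta _ do rewrite exchange_big.
under eq_bigr => x _ do under eq_bigr => y _ do rewrite exchange_big.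
apply: eq_bigr => x _; rewrite big_mkord; apply: eq_bigr => y _; rewrite big_mkord.
apply: eq_bigr => z _.
apply: eq_bigr => a _; apply: eq_bigr => b _; apply: eq_bigr => c _.
rewrite !vf_cons; congr (nat_of_bool (P _ _)); lia.
Qed.

Definition pr (d1 d2 : int) (k l : int) : bool := (k == d1) && (l == d2).
Definition cnt n d1 d2 := g n (pr d1 d2).

Lemma step_t n d1 d2 c1 c2 (e1 e2 : int) : c1 + 2 * e1 = d1 -> c2 + 2 * e2 = d2 ->
  g n (fun k l => pr d1 d2 (c1 + 2 * k) (c2 + 2 * l)) = cnt n e1 e2.
Proof.
move=> h1 h2; apply: eq_g => k l; rewrite /pr.
apply/andP/andP => -[/eqP h3 /eqP h4]; split; apply/eqP; lia.
Qed.

Lemma g_false n : g n (fun _ _ => false) = 0%N.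
Proof. by rewrite /g big1 // => a _; rewrite big1 // => b _; rewrite big1. Qed.

Lemma step_f1 n d1 d2 c1 c2 : (forall e : int, c1 + 2 * e <> d1) ->
  g n (fun k l => pr d1 d2 (c1 + 2 * k) (c2 + 2 * l)) = 0%N.
Proof.
move=> h; rewrite -[RHS](g_false n); apply: eq_g => k l; rewrite /pr.
by apply/negbTE/negP => /andP[/eqP E _]; apply: (h k).
Qed.

Lemma step_f2 n d1 d2 c1 c2 : (forall e : int, c2 + 2 * e <> d2) ->
  g n (fun k l => pr d1 d2 (c1 + 2 * k) (c2 + 2 * l)) = 0%N.
Proof.
move=> h; rewrite -[RHS](g_false n); apply: eq_g => k l; rewrite /pr.
by apply/negbTE/negP => /andP[_ /eqP E]; apply: (h l).
Qed.

Ltac stp n :=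
  first
  [ rewrite (@step_t n _ _ _ _ 0 0); [|lia|lia]
  | rewrite (@step_t n _ _ _ _ 0 1); [|lia|lia]
  | rewrite (@step_t n _ _ _ _ 0 (-1)); [|lia|lia]
  | rewrite (@step_t n _ _ _ _ 1 0); [|lia|lia]
  | rewrite (@step_t n _ _ _ _ 1 1); [|lia|lia]
  | rewrite (@step_t n _ _ _ _ 1 (-1)); [|lia|lia]
  | rewrite (@step_t n _ _ _ _ (-1) 0); [|lia|lia]
  | rewrite (@step_t n _ _ _ _ (-1) 1); [|lia|lia]
  | rewrite (@step_t n _ _ _ _ (-1) (-1)); [|lia|lia]
  | rewrite (@step_f1 n); [|let e := fresh in move=> e; lia]
  | rewrite (@step_f2 n); [|let e := fresh in move=> e; lia] ].


Lemma vf0 (a : {ffun 'I_0 -> 'I_3}) : vf a = 0%N.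
Proof. by rewrite /vf /valuation big_ord0. Qed.

Lemma g0 P : g 0 P = P 0 0.
Proof.
rewrite /g.
under eq_bigr do under eq_bigr do under eq_bigr do rewrite !vf0 subrr.
by rewrite !sum_nat_const card_ffun !card_ord /= !mul1n.
Qed.

Ltac ev n := rewrite /cnt gS unlock /=; repeat stp n; rewrite ?addn0 ?add0n.

Lemma inv_cnt n :
  cnt n.+1 0 0 = (3 * 7 ^ n)%N /\
      cnt n.+1 0 1 = (2 * 7 ^ n)%N /\ cnt n.+1 0 (-1) = (2 * 7 ^ n)%N /\
      cnt n.+1 1 0 = (2 * 7 ^ n)%N /\ cnt n.+1 (-1) 0 = (2 * 7 ^ n)%N /\
      cnt n.+1 1 (-1) = (2 * 7 ^ n)%N /\ cnt n.+1 (-1) 1 = (2 * 7 ^ n)%N.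
Proof.
elim: n => [|n [h1 [h2 [h3 [h4 [h5 [h6 h7]]]]]]].
  (repeat split); ev 0%N; rewrite /cnt !g0 /pr //.
(repeat split); ev n.+1; rewrite ?h1 ?h2 ?h3 ?h4 ?h5 ?h6 ?h7 expnS; lia.
Qed.

Local Open Scope ring_scope.
Definition mk n (p : {ffun 'I_n -> 'I_3} * ({ffun 'I_n -> 'I_3} * {ffun 'I_n -> 'I_3})) : 'M['I_3]_(3, n) :=
  \matrix_(r < 3, i < n) (if nat_of_ord r == 0%N then p.1 i else if nat_of_ord r == 1%N then p.2.1 i else p.2.2 i).
Definition unmk n (M : 'M['I_3]_(3, n)) :=
  ([ffun i => M (inord 0) i], ([ffun i => M (inord 1) i], [ffun i => M (inord 2) i])).

Lemma card_A3 n : #|[pred M | @A3 n M]| = cnt n 0 0.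
Proof.
rewrite -sum1_card big_mkcond /=.
rewrite (reindex (@mk n)) /=; last first.
  exists (@unmk n) => [[a [b c]] _|M _].
    by congr (_, (_, _)); apply/ffunP => i; rewrite !ffunE mxE inordK.
  apply/matrixP => r i; rewrite mxE.
  case: r => [[|[|[|r]]] hr] //=; rewrite ffunE; congr (M _ i); apply: val_inj;
    by rewrite /= inordK.
rewrite /cnt /g; under [RHS]eq_bigr => a _ do rewrite pair_big; rewrite pair_big /=.
apply: eq_bigr => -[a [b c]] _ /=.
have e : forall (j : nat) (f : {ffun 'I_n -> 'I_3}), (j < 3)%N ->
    (forall i, mk (a, (b, c)) (inord j) i = f i) ->
    valuation (fun i => mk (a, (b, c)) (inord j) i) = vf f.
  by move=> j f _ h; rewrite /vf /valuation; apply: eq_bigr => i _; rewrite h.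
rewrite inE /A3 (e 0%N a) // ?(e 1%N b) // ?(e 2%N c) //; last 3 first.
- by move=> i; rewrite mxE inordK.
- by move=> i; rewrite mxE inordK.
- by move=> i; rewrite mxE inordK.
by rewrite /pr !subr_eq0 !eqz_nat.
Qed.

Lemma card_S n : #|[pred w | @Swords n.+1 w]| = (3 * 7 ^ n)%N.
Proof.
pose F := fun i : 'I_n.+1 => if nat_of_ord i == n then [pred k : 'I_7 | (k < 3)%N] else predT.
rewrite (@eq_card _ _ (family F)); last first.
  move=> w; rewrite !inE /Swords; apply: eq_forallb => i; rewrite /F /=.
  by case: (nat_of_ord i == n).
rewrite card_family foldrE big_map big_enum /=.
rewrite big_ord_recr /= /F /= eqxx.
have -> : #|[pred k : 'I_7 | (k < 3)%N]| = 3%N.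
  by rewrite -sum1_card big_mkcond /= !big_ord_recr big_ord0.
rewrite mulnC; congr (_ * _)%N.
rewrite -[X in (X ^ _)%N](card_ord 7) -[in RHS](card_ord n) -prod_nat_const.
apply: eq_bigr => i _; rewrite (ltn_eqF (ltn_ord i)).
by apply: eq_card => k.
Qed.

Local Close Scope ring_scope.
Lemma card_bij (T1 T2 : finType) : #|T1| = #|T2| -> exists f : T1 -> T2, bijective f.
Proof.
move=> e.
exists (fun x => enum_val (cast_ord e (enum_rank x))).
exists (fun y => enum_val (cast_ord (esym e) (enum_rank y))) => [x|y].
  by rewrite enum_valK cast_ordK enum_rankK.
by rewrite enum_valK cast_ordKV enum_rankK.
Qed.

Theorem mainTheorem1 (n : nat) (hn : 1 <= n) :
  exists f : {M : 'M['I_3]_(3, n) | @A3 n M} -> {w : {ffun 'I_n -> 'I_7} | @Swords n w},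
    bijective f.
Proof.
apply: card_bij; rewrite !card_sig.
case: n hn => // n _.
rewrite card_A3 card_S.
by case: (inv_cnt n).
Qed.
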